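(* Let $X=[0,1]$, let $\Gamma$ be the group of orientation-preserving self-homeomorphisms of $[0,1]$ acting by application, and let $I$ be the ideal generated by the countable closed subsets of $[0,1]$ (i.e. subsets of countable closed sets). Then $\Gamma\curvearrowright X, I$ is $\sigma$-complete.
   Context: For a group $\Gamma$ acting on $X$, an invariant ideal $I$ on $X$ and $a\subseteq X$, $\mathrm{pstab}(a)=\{\gamma\in\Gamma:\gamma\cdot x=x\ \forall x\in a\}$ and $\gamma\cdot b=\{\gamma\cdot x:x\in b\}$. The dynamical ideal is $\sigma$-complete if for every $a\in I$ and every sequence $\langle b_n:n\in\omega\rangle$ of sets in $I$ there are $\gamma_n\in\mathrm{pstab}(a)$ with $\bigcup_n\gamma_n\cdot b_n\in I$. *)

(* Defs.v *)
From HB Require Import structures.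
From mathcomp Require Import all_boot all_order all_algebra.
From mathcomp Require Import all_classical all_reals all_analysis.
Set Implicit Arguments. Unset Strict Implicit. Unset Printing Implicit Defensive.
Import Order.TTheory GRing.Theory Num.Theory.
Import numFieldNormedType.Exports.
Local Open Scope classical_set_scope.
Local Open Scope ring_scope.

Definition I01 {R : realType} : set R := [set x | 0 <= x <= 1].

Definition homeo01 {R : realType} (g : R -> R) : Prop :=
  exists h : R -> R,
    set_fun I01 I01 g /\ set_fun I01 I01 h /\
    (forall x, I01 x -> h (g x) = x) /\ (forall x, I01 x -> g (h x) = x) /\
    {within I01, continuous g} /\ {within I01, continuous h}.

Definition orient_pres {R : realType} (g : R -> R) : Prop :=
  forall x y, I01 x -> I01 y -> x <= y -> g x <= g y.

Definition Gamma {R : realType} (g : R -> R) : Prop := homeo01 g /\ orient_pres g.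

Definition idealI {R : realType} (a : set R) : Prop :=
  exists C : set R, [/\ C `<=` I01, closed C, countable C & a `<=` C].

Definition pstab {R : realType} (a : set R) (g : R -> R) : Prop :=
  Gamma g /\ forall x, a x -> g x = x.

Definition sigma_complete (R : realType) : Prop :=
  forall a : set R, a `<=` I01 -> idealI a ->
  forall b : nat -> set R, (forall n, b n `<=` I01 /\ idealI (b n)) ->
  exists g : nat -> R -> R, (forall n, pstab a (g n)) /\
    idealI (\bigcup_n (g n @` b n)).

(* Main.v *)
Require Import Defs.
From mathcomp Require Import all_boot all_order all_algebra.
From mathcomp Require Import all_classical all_reals all_analysis.
From mathcomp Require Import lra.
Set Implicit Arguments. Unset Strict Implicit. Unset Printing Implicit Defensive.
Import Order.TTheory GRing.Theory Num.Theory.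
Import numFieldNormedType.Exports.
Local Open Scope classical_set_scope.
Local Open Scope ring_scope.

Definition sinc (R : realType) (f : R -> R) := forall x y, x < y -> f x < f y.
Definition ssurj (R : realType) (f : R -> R) := forall z, exists y, f y = z.
Definition glue (R : realType) (p : R) (f g : R -> R) := fun y => if y <= p then f y else g y.
Definition lin (R : realType) (a c s : R) := fun y => c + s * (y - a).

Lemma sinc_le (R : realType) (f : R -> R) x y : sinc f -> x <= y -> f x <= f y.
Proof. by move=> hf; rewrite le_eqVlt => /orP[/eqP->|/hf/ltW]. Qed.

Lemma sinc_le_rev (R : realType) (f : R -> R) x y : sinc f -> f x <= f y -> x <= y.
Proof. by move=> hf h; rewrite leNgt; apply/negP => /hf; rewrite ltNge h. Qed.

Lemma sinc_lt_rev (R : realType) (f : R -> R) x y : sinc f -> f x < f y -> x < y.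
Proof. by move=> hf h; rewrite ltNge; apply/negP => /(sinc_le hf); rewrite leNgt h. Qed.

Lemma glue_inc (R : realType) (p : R) f g :
  sinc f -> sinc g -> f p = g p -> sinc (glue p f g).
Proof.
move=> hf hg e x y xy; rewrite /glue.
case: (lerP x p) => xp; case: (lerP y p) => yp.
- exact: hf.
- by apply: (le_lt_trans (sinc_le hf xp)); rewrite e; apply: hg.
- by have := lt_trans (le_lt_trans yp xp) xy; rewrite ltxx.
- exact: hg.
Qed.

Lemma glue_surj (R : realType) (p : R) f g :
  sinc f -> sinc g -> ssurj f -> ssurj g -> f p = g p -> ssurj (glue p f g).
Proof.
move=> hf hg sf sg e z; case: (lerP z (f p)) => zp.
- have [y fy] := sf z; exists y.
  have yp : y <= p by apply: (sinc_le_rev hf); rewrite fy.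
  by rewrite /glue yp.
- have [y gy] := sg z; exists y.
  have py : p < y by apply: (sinc_lt_rev hg); rewrite gy -e.
  by rewrite /glue leNgt py.
Qed.

Lemma lin_inc (R : realType) (a c s : R) : 0 < s -> sinc (lin a c s).
Proof. by move=> s0 x y xy; rewrite /lin ltrD2l ltr_pM2l // ltrD2r. Qed.

Lemma lin_surj (R : realType) (a c s : R) : 0 < s -> ssurj (lin a c s).
Proof.
move=> s0 z; exists (a + (z - c) / s); rewrite /lin addrAC subrr add0r.
by rewrite mulrC divfK ?gt_eqF // addrC subrK.
Qed.

Lemma id_inc (R : realType) : sinc (@id R). Proof. by []. Qed.
Lemma id_surj (R : realType) : ssurj (@id R). Proof. by move=> z; exists z. Qed.

Definition Psi (R : realType) (l u v r e : R) : R -> R :=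
  glue l id (glue u (lin l l (e / (u - l)))
    (glue v (lin u (l + e) ((r - e - (l + e)) / (v - u)))
      (glue r (lin v (r - e) (e / (r - v))) id))).

Lemma Psi_props (R : realType) (l u v r e : R) :
  l < u -> u < v -> v < r -> 0 < e -> l + e < r - e ->
  [/\ sinc (Psi l u v r e), ssurj (Psi l u v r e),
      (forall y, y <= l -> Psi l u v r e y = y),
      (forall y, r <= y -> Psi l u v r e y = y)
    & Psi l u v r e u = l + e /\ Psi l u v r e v = r - e].
Proof.
move=> lu uv vr e0 le.
have s1 : 0 < e / (u - l) by rewrite divr_gt0 // subr_gt0.
have s2 : 0 < (r - e - (l + e)) / (v - u) by rewrite divr_gt0 // subr_gt0.
have s3 : 0 < e / (r - v) by rewrite divr_gt0 // subr_gt0.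
have nul : u - l != 0 by rewrite subr_eq0 gt_eqF.
have nvu : v - u != 0 by rewrite subr_eq0 gt_eqF.
have nrv : r - v != 0 by rewrite subr_eq0 gt_eqF.
pose g3 := glue r (lin v (r - e) (e / (r - v))) id.
pose g2 := glue v (lin u (l + e) ((r - e - (l + e)) / (v - u))) g3.
pose g1 := glue u (lin l l (e / (u - l))) g2.
have PsiE : Psi l u v r e = glue l id g1 by [].
rewrite PsiE.
have e3 : lin v (r - e) (e / (r - v)) r = id r.
  by rewrite /lin divfK // subrK.
have i3 : sinc g3 by apply: glue_inc; [exact: lin_inc|exact: id_inc|exact: e3].
have j3 : ssurj g3 by apply: glue_surj;
  [exact: lin_inc|exact: id_inc|exact: lin_surj|exact: id_surj|exact: e3].
have e2 : lin u (l + e) ((r - e - (l + e)) / (v - u)) v = g3 v.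
  by rewrite /g3 /glue (ltW vr) /lin subrr mulr0 addr0 divfK // addrC subrK.
have i2 : sinc g2 by apply: glue_inc; [exact: lin_inc|exact: i3|exact: e2].
have j2 : ssurj g2 by apply: glue_surj; [exact: lin_inc|exact: i3|exact: lin_surj|exact: j3|exact: e2].
have e1 : lin l l (e / (u - l)) u = g2 u.
  by rewrite /g2 /glue (ltW uv) /lin subrr mulr0 addr0 divfK.
have i1 : sinc g1 by apply: glue_inc; [exact: lin_inc|exact: i2|exact: e1].
have j1 : ssurj g1 by apply: glue_surj; [exact: lin_inc|exact: i2|exact: lin_surj|exact: j2|exact: e1].
have e0' : id l = g1 l.
  by rewrite /g1 /glue (ltW lu) /lin subrr mulr0 addr0.
split.
- by apply: glue_inc; [exact: id_inc|exact: i1|exact: e0'].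
- by apply: glue_surj; [exact: id_inc|exact: i1|exact: id_surj|exact: j1|exact: e0'].
- by move=> y yl; rewrite /glue yl.
- move=> y ry; rewrite /glue.
  have -> : (y <= l) = false by apply/negbTE; rewrite -ltNge; apply: (lt_le_trans _ ry); apply: (lt_trans lu); exact: lt_trans uv vr.
  rewrite /g1 /glue.
  have -> : (y <= u) = false by apply/negbTE; rewrite -ltNge; apply: (lt_le_trans _ ry); exact: lt_trans uv vr.
  rewrite /g2 /glue.
  have -> : (y <= v) = false by apply/negbTE; rewrite -ltNge; exact: lt_le_trans vr ry.
  rewrite /g3 /glue; case: ifP => // yr.
  by have -> : y = r by apply/eqP; rewrite eq_le yr ry.
- split.
  + rewrite /glue leNgt lu /= /g1 /glue lexx.
    by rewrite /lin divfK // addrC subrK.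
  + rewrite /glue leNgt (lt_trans lu uv) /= /g1 /glue leNgt uv /=.
    by rewrite /g2 /glue lexx /lin divfK // addrC subrK.
Qed.

Lemma exists_notin (R : realType) (C : set R) (l r : R) :
  l < r -> countable C -> exists m, l < m < r /\ ~ C m.
Proof.
move=> lr cC; apply: contrapT => H.
have sub : `]l, r[ `<=` C.
  move=> y; rewrite /= in_itv /= => yi; apply: contrapT => nCy.
  by apply: H; exists y.
have := countable_lebesgue_measure0 (sub_countable (subset_card_le sub) cC).
rewrite lebesgue_measure_itv /= lte_fin lr => /eqP.
by rewrite -EFinD eqe subr_eq0 gt_eqF.
Qed.

Lemma psi_exists (R : realType) (C : set R) (l r e : R) :
  closed C -> countable C -> l < r -> 0 < e -> l + e < r - e ->
  exists psi : R -> R, [/\ sinc psi, ssurj psi,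
      (forall y, y <= l -> psi y = y), (forall y, r <= y -> psi y = y)
    & forall y, C y -> l < y < r -> psi y <= l + e \/ r - e <= psi y].
Proof.
move=> clC cC lr e0 le.
have [m [/andP[lm mr] nCm]] := exists_notin lr cC.
have : nbhs m (~` C) by apply: open_nbhs_nbhs; split => //; exact: closed_openC.
move/nbhs_ballP => [d d0 hd].
pose d' := Num.min (d / 2) (Num.min ((m - l) / 2) ((r - m) / 2)).
have d'1 : d' <= d / 2 by rewrite /d' ge_min lexx.
have d'2 : d' <= (m - l) / 2 by rewrite /d' !ge_min lexx orbT.
have d'3 : d' <= (r - m) / 2 by rewrite /d' !ge_min lexx !orbT.
have d'0 : 0 < d' by rewrite /d' !lt_min !divr_gt0 ?subr_gt0.
have lu : l < m - d' by lra.
have uv : m - d' < m + d' by lra.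
have vr : m + d' < r by lra.
have [i s f1 f2 [fu fv]] := Psi_props lu uv vr e0 le.
exists (Psi l (m - d') (m + d') r e); split => // y Cy /andP[ly yr].
case: (lerP y (m - d')) => yu.
  by left; rewrite -fu; exact: sinc_le.
case: (lerP (m + d') y) => yv.
  by right; rewrite -fv; exact: sinc_le.
exfalso; apply: (hd y) => //.
rewrite -ball_normE /ball_ /=.
rewrite ltr_norml; apply/andP; split; lra.
Qed.

Definition Lf (R : realType) (K : set R) (x : R) := sup [set k | K k /\ k <= x].
Definition Rf (R : realType) (K : set R) (x : R) := inf [set k | K k /\ x <= k].

Lemma sup_in (R : realType) (K A : set R) :
  closed K -> A `<=` K -> A !=set0 -> has_ubound A -> K (sup A).
Proof.
move=> clK AK A0 ub.
have := closure_sup A0 ub.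
move/(closureS AK); by rewrite -((closure_id K).1 clK).
Qed.

Lemma inf_in (R : realType) (K A : set R) :
  closed K -> A `<=` K -> A !=set0 -> has_lbound A -> K (inf A).
Proof.
move=> clK AK [a Aa] [b lb].
pose K' := [set y : R | K (- y)].
have clK' : closed K'.
  have := (continuous_closedP (-%R : R -> R)).1 (@oppr_continuous _ R^o) K clK.
  by [].
have : K' (sup [set - x | x in A]).
  apply: sup_in => //.
  - by move=> _ [y Ay <-]; rewrite /K' /= opprK; exact: AK.
  - by exists (- a), a.
  - exists (- b) => _ [y Ay <-]; rewrite lerN2; exact: lb.
by [].
Qed.

Lemma gap_struct (R : realType) (K : set R) (x : R) :
  closed K -> K 0 -> K 1 -> 0 <= x <= 1 -> ~ K x ->
  [/\ K (Lf K x), K (Rf K x), Lf K x < x, x < Rf K x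
    & forall z, Lf K x < z < Rf K x -> ~ K z].
Proof.
move=> clK K0 K1 /andP[x0 x1] nKx.
set AL := [set k | K k /\ k <= x].
set AR := [set k | K k /\ x <= k].
have AL0 : AL !=set0 by exists 0.
have AR0 : AR !=set0 by exists 1.
have ubL : has_ubound AL by exists x => k [].
have lbR : has_lbound AR by exists x => k [].
have KL : K (Lf K x) by apply: sup_in => // k [].
have KR : K (Rf K x) by apply: inf_in => // k [].
have Lx : Lf K x <= x by apply: ge_sup => // k [].
have xR : x <= Rf K x by apply: lb_le_inf => // k [].
have Lx' : Lf K x < x by rewrite lt_neqAle Lx andbT; apply/eqP => E; apply: nKx; rewrite -E.
have xR' : x < Rf K x by rewrite lt_neqAle xR andbT; apply/eqP => E; apply: nKx; rewrite E.
split => // z /andP[Lz zR] Kz.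
case: (lerP z x) => zx.
  have : z <= Lf K x by apply: ub_le_sup => //; split.
  by rewrite leNgt Lz.
have : Rf K x <= z by apply: ge_inf => //; split => //; exact: ltW.
by rewrite leNgt zR.
Qed.

Lemma gap_uniq (R : realType) (K : set R) (l r x : R) :
  K l -> K r -> l < x < r -> (forall z, l < z < r -> ~ K z) ->
  Lf K x = l /\ Rf K x = r.
Proof.
move=> Kl Kr /andP[lx xr] gap.
set AL := [set k | K k /\ k <= x].
set AR := [set k | K k /\ x <= k].
have ubL : has_ubound AL by exists x => k [].
have lbR : has_lbound AR by exists x => k [].
split; apply/eqP; rewrite eq_le; apply/andP; split.
- apply: ge_sup; first by exists l; split => //; exact: ltW.
  move=> k [Kk kx]; rewrite leNgt; apply/negP => lk.
  by apply: (gap k) => //; rewrite lk /=; exact: le_lt_trans kx xr.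
- by apply: ub_le_sup => //; split => //; exact: ltW.
- by apply: ge_inf => //; split => //; exact: ltW.
- apply: lb_le_inf; first by exists r; split => //; exact: ltW.
  move=> k [Kk xk]; rewrite leNgt; apply/negP => kr.
  by apply: (gap k) => //; rewrite kr andbT; exact: lt_le_trans lx xk.
Qed.

Definition sinc01 (R : realType) (f : R -> R) :=
  forall x y, I01 x -> I01 y -> x < y -> f x < f y.
Definition surj01 (R : realType) (f : R -> R) :=
  forall y, I01 y -> exists x, I01 x /\ f x = y.

Lemma I01E (R : realType) : (I01 : set R) = `[0, 1]%classic.
Proof. by rewrite set_itvcc. Qed.

Lemma sinc01_le (R : realType) (f : R -> R) x y : sinc01 f -> I01 x -> I01 y ->
  (f x <= f y) = (x <= y).
Proof.
move=> hf Ix Iy; apply/idP/idP => h.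
- by rewrite leNgt; apply/negP => /(hf _ _ Iy Ix); rewrite ltNge h.
- by move: h; rewrite le_eqVlt => /orP[/eqP->//|/(hf _ _ Ix Iy)/ltW].
Qed.

Lemma I01_0 (R : realType) : I01 (0 : R). Proof. by rewrite /I01 /= lexx ler01. Qed.
Lemma I01_1 (R : realType) : I01 (1 : R). Proof. by rewrite /I01 /= lexx ler01. Qed.

Lemma mono_cont (R : realType) (f : R -> R) :
  sinc01 f -> surj01 f -> (forall x, I01 x -> I01 (f x)) ->
  {within I01, continuous f}.
Proof.
move=> hf sf If.
have f0 : f 0 = 0.
  have [x [Ix fx]] := sf 0 (I01_0 R).
  apply/eqP; rewrite eq_le; apply/andP; split; last by have := If 0 (I01_0 R); case/andP.
  by have := sinc01_le hf (I01_0 R) Ix; rewrite fx => ->; case/andP: Ix.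
have f1 : f 1 = 1.
  have [x [Ix fx]] := sf 1 (I01_1 R).
  apply/eqP; rewrite eq_le; apply/andP; split; first by have := If 1 (I01_1 R); case/andP.
  by have := sinc01_le hf Ix (I01_1 R); rewrite fx => ->; case/andP: Ix.
rewrite I01E; apply: segment_inc_surj_continuous.
- move=> x y; rewrite !in_itv /= => Ix Iy; exact: sinc01_le.
- rewrite f0 f1 -I01E => y Iy.
  have [x [Ix fx]] := sf y Iy; by exists x.
Qed.

Lemma Gamma_of (R : realType) (f : R -> R) :
  sinc01 f -> surj01 f -> (forall x, I01 x -> I01 (f x)) -> Gamma f.
Proof.
move=> hf sf If.
have [h hh] : {h : R -> R & forall y, I01 y -> I01 (h y) /\ f (h y) = y}.
  apply: (@choice _ _ (fun y x => I01 y -> I01 x /\ f x = y)) => y.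
  case: (pselect (I01 y)) => Iy.
    by have [x [Ix fx]] := sf y Iy; exists x.
  by exists 0.
have hf' : sinc01 h.
  move=> x y Ix Iy xy; have [Ihx fhx] := hh x Ix; have [Ihy fhy] := hh y Iy.
  by rewrite ltNge -(sinc01_le hf) // fhx fhy -ltNge.
have sh : surj01 h.
  move=> y Iy; exists (f y); split; first exact: If.
  have [Ihx fhx] := hh (f y) (If y Iy).
  apply/eqP; rewrite eq_le -(sinc01_le hf Ihx Iy) -(sinc01_le hf Iy Ihx).
  by rewrite fhx lexx.
have Ih : forall x, I01 x -> I01 (h x) by move=> x /hh[].
split; last by move=> x y Ix Iy; rewrite sinc01_le.
exists h; split; first exact: If.
split; first exact: Ih.
split; [|split; [|split]].
- move=> x Ix; have [Ihx fhx] := hh (f x) (If x Ix).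
  apply/eqP; rewrite eq_le -(sinc01_le hf Ihx Ix) -(sinc01_le hf Ix Ihx).
  by rewrite fhx lexx.
- by move=> x /hh[].
- exact: mono_cont.
- exact: mono_cont.
Qed.

Lemma psi_in (R : realType) (psi : R -> R) l r x :
  sinc psi -> psi l = l -> psi r = r -> l < x < r -> l < psi x < r.
Proof.
move=> si pl pr /andP[lx xr]; apply/andP; split.
- by rewrite -pl; exact: si.
- by rewrite -pr; exact: si.
Qed.

Lemma Lf_ge (R : realType) (K : set R) k y : K k -> k <= y -> k <= Lf K y.
Proof. by move=> Kk ky; apply: ub_le_sup => //; exists y => z []. Qed.

Lemma Rf_le (R : realType) (K : set R) k y : K k -> y <= k -> Rf K y <= k.
Proof. by move=> Kk ky; apply: ge_inf => //; exists y => z []. Qed.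

Lemma ep_facts (R : realType) (n : nat) (l r : R) : l < r ->
  0 < (r - l) / n.+3%:R /\ l + (r - l) / n.+3%:R < r - (r - l) / n.+3%:R.
Proof.
move=> lr; set e := (r - l) / n.+3%:R.
have N0 : (0 : R) < n.+3%:R by rewrite ltr0n.
have e0 : 0 < e by rewrite divr_gt0 // subr_gt0.
have eN : r - l = e * n.+3%:R by rewrite /e divfK // gt_eqF.
have N3 : (3 : R) <= n.+3%:R by rewrite ler_nat.
have : e * 3 <= e * n.+3%:R by rewrite ler_pM2l.
split => //; lra.
Qed.

Lemma g_exists (R : realType) (K C : set R) (n : nat) :
  closed K -> K `<=` I01 -> K 0 -> K 1 -> closed C -> countable C ->
  exists g : R -> R, [/\ Gamma g, (forall x, K x -> g x = x),
    (forall x, I01 x -> I01 (g x)) &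
    (forall y, C y -> I01 y -> ~ K y -> exists l r, [/\ K l, K r, l < g y < r,
        (forall z, l < z < r -> ~ K z) &
        (g y <= l + (r - l) / n.+3%:R \/ r - (r - l) / n.+3%:R <= g y)])].
Proof.
move=> clK KI K0 K1 clC cC.
pose ep (l r : R) := (r - l) / n.+3%:R.
pose P (l r : R) (psi : R -> R) := [/\ sinc psi, ssurj psi,
   (forall y, y <= l -> psi y = y), (forall y, r <= y -> psi y = y)
 & forall y, C y -> l < y < r -> psi y <= l + ep l r \/ r - ep l r <= psi y].
have hP : forall l, exists F : R -> R -> R, forall r, l < r -> P l r (F r).
  move=> l.
  have H : forall r, exists psi, l < r -> P l r psi.
    move=> r; case: (pselect (l < r)) => lr; last by exists id.
    have [e0 le] := ep_facts n lr.
    have [psi H] := psi_exists clC cC lr e0 le; by exists psi.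
  have [F HF] := @choice _ _ (fun r psi => l < r -> P l r psi) H.
  by exists F.
have [Ps hPs] := @choice _ _ (fun l F => forall r, l < r -> P l r (F r)) hP.
pose g x := if pselect (I01 x /\ ~ K x) then Ps (Lf K x) (Rf K x) x else x.
have gK : forall x, K x -> g x = x.
  move=> x Kx; rewrite /g; destruct (pselect (I01 x /\ ~ K x)) as [[Ix0 nKx]|] => //; case: (nKx Kx).
have gG : forall x, I01 x -> ~ K x -> g x = Ps (Lf K x) (Rf K x) x.
  move=> x Ix nKx; rewrite /g; destruct (pselect (I01 x /\ ~ K x)) as [|n0] => //; by case: n0; split.
have gapx : forall x, I01 x -> ~ K x -> [/\ K (Lf K x), K (Rf K x), Lf K x < x, x < Rf K x
    & forall z, Lf K x < z < Rf K x -> ~ K z].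
  by move=> x Ix nKx; apply: gap_struct.
have Pin : forall l r x, l < r -> l < x < r -> l < Ps l r x < r.
  move=> l r x lr lxr; have [si _ fl fr _] := hPs l r lr.
  by apply: psi_in => //; [exact: fl|exact: fr].
have gin : forall x, I01 x -> ~ K x -> Lf K x < g x < Rf K x.
  move=> x Ix nKx; have [_ _ lx xr _] := gapx x Ix nKx.
  rewrite gG //; apply: Pin; [exact: lt_trans lx xr|by rewrite lx xr].
have IK : forall x, K x -> 0 <= x <= 1 by move=> x /KI.
exists g; split => //.
- apply: Gamma_of.
  + move=> x y Ix Iy xy.
    case: (pselect (K x)) => Kx; case: (pselect (K y)) => Ky.
    * by rewrite !gK.
    * rewrite gK //; apply: le_lt_trans (Lf_ge Kx (ltW xy)) _.
      by case/andP: (gin y Iy Ky).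
    * rewrite (gK y) //; apply: lt_le_trans (Rf_le Ky (ltW xy)).
      by case/andP: (gin x Ix Kx).
    * have [Kl Kr lx xr gp] := gapx x Ix Kx.
      case: (ltP y (Rf K x)) => yr.
      - have [Ly Ry] := gap_uniq Kl Kr (introT andP (conj (lt_trans lx xy) yr)) gp.
        rewrite !gG // Ly Ry; by have [si _ _ _ _] := hPs _ _ (lt_trans lx xr); apply: si.
      - apply: (@lt_le_trans _ _ (Rf K x)); first by case/andP: (gin x Ix Kx).
        apply: (@le_trans _ _ (Lf K y)); first exact: Lf_ge Kr yr.
        by apply: ltW; case/andP: (gin y Iy Ky).
  + move=> y Iy; case: (pselect (K y)) => Ky; first by exists y; rewrite gK.
    have [Kl Kr ly yr gp] := gapx y Iy Ky.
    have lr := lt_trans ly yr.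
    have [si su fl fr _] := hPs _ _ lr.
    have [x px] := su y.
    have lx : Lf K y < x by apply: (sinc_lt_rev si); rewrite px fl.
    have xr : x < Rf K y by apply: (sinc_lt_rev si); rewrite px fr.
    have lxr : Lf K y < x < Rf K y by rewrite lx xr.
    have Ix : I01 x.
      have := IK _ Kl; have := IK _ Kr; rewrite /I01 /=; lra.
    have nKx : ~ K x by apply: gp.
    have [Lx Rx] := gap_uniq Kl Kr lxr gp.
    by exists x; split => //; rewrite gG // Lx Rx.
  + move=> x Ix; case: (pselect (K x)) => Kx; first by rewrite gK.
    have [Kl Kr _ _ _] := gapx x Ix Kx.
    have := gin x Ix Kx; have := IK _ Kl; have := IK _ Kr; rewrite /I01 /=; lra.
- move=> x Ix; case: (pselect (K x)) => Kx; first by rewrite gK.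
  have [Kl Kr _ _ _] := gapx x Ix Kx.
  have := gin x Ix Kx; have := IK _ Kl; have := IK _ Kr; rewrite /I01 /=; lra.
- move=> y Cy Iy Ky.
  have [Kl Kr ly yr gp] := gapx y Iy Ky.
  exists (Lf K y), (Rf K y); split => //; first exact: gin.
  have [_ _ _ _ fC] := hPs _ _ (lt_trans ly yr).
  by rewrite gG //; apply: fC => //; rewrite ly yr.
Qed.

Lemma countableU2 (R : realType) (A B : set R) :
  countable A -> countable B -> countable (A `|` B).
Proof.
move=> cA cB.
have -> : A `|` B = \bigcup_(i in [set: bool]) (if i then A else B).
  apply/seteqP; split => x.
  - by case=> h; [exists true|exists false].
  - by case=> -[] _ h; [left|right].
by apply: bigcup_countable; [exact: countableP|case].
Qed.

Lemma countable_img (R : realType) (f : R -> R) (A : set R) :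
  countable A -> countable (f @` A).
Proof. by move=> cA; apply: sub_countable (card_image_le f A) cA. Qed.

Theorem mainTheorem11 (R : realType) : sigma_complete R.
Proof.
move=> a aI [Ca [CaI clCa cCa aCa]] b hb.
have [C hC] := @choice _ _ (fun n (Cn : set R) =>
  [/\ Cn `<=` I01, closed Cn, countable Cn & b n `<=` Cn]) (fun n => (hb n).2).
pose K := Ca `|` [set (0 : R); 1].
have K0 : K 0 by right; left.
have K1 : K 1 by right; right.
have KI : K `<=` I01.
  move=> z [/CaI //|[->|->]]; [exact: I01_0|exact: I01_1].
have clK : closed K.
  apply: closedU => //.
  apply: (accessible_finite_set_closed.1 (hausdorff_accessible (@norm_hausdorff _ R^o))).
  exact: finite_set2.
have cK : countable K.
  apply: countableU2 => //; apply: finite_set_countable; exact: finite_set2.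
have [G hG] := @choice _ _ (fun n g => [/\ Gamma g, (forall x, K x -> g x = x),
    (forall x, I01 x -> I01 (g x)) &
    (forall y, C n y -> I01 y -> ~ K y -> exists l r, [/\ K l, K r, l < g y < r,
        (forall z, l < z < r -> ~ K z) &
        (g y <= l + (r - l) / n.+3%:R \/ r - (r - l) / n.+3%:R <= g y)])])
  (fun n => let: And4 CI Ccl Cc _ := hC n in g_exists n clK KI K0 K1 Ccl Cc).
exists G; split.
  move=> n; have [Gg gK _ _] := hG n; split => // x ax; apply: gK; left; exact: aCa.
pose D := K `|` \bigcup_n (G n @` C n).
have DI : D `<=` I01.
  move=> z [/KI //|[n _ [y Cy <-]]].
  have [_ _ GI _] := hG n; apply: GI; have [CI _ _ _] := hC n; exact: CI.
exists D; split => //.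
- move=> x clx.
  have Ix : I01 x.
    have : closure I01 x by exact: (closureS DI clx).
    by rewrite -((closure_id I01).1 _) // I01E; exact: itv_closed.
  case: (pselect (K x)) => Kx; first by left.
  have [Kl Kr lx xr gp] := gap_struct clK K0 K1 Ix Kx.
  set l := Lf K x in Kl lx gp *; set r := Rf K x in Kr xr gp *.
  pose d := Num.min (x - l) (r - x) / 2.
  have d0 : 0 < d by rewrite /d divr_gt0 // lt_min !subr_gt0 lx xr.
  have d1 : d * 2 <= x - l by rewrite /d divfK // ge_min lexx.
  have d2 : d * 2 <= r - x by rewrite /d divfK // ge_min lexx orbT.
  pose N := Num.trunc ((r - l) / d).
  have HN : forall n, (N <= n)%N -> (r - l) / n.+3%:R <= d.
    move=> n Nn; have := truncnS_gt ((r - l) / d); rewrite -/N => h.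
    have h2 : (N.+1%:R : R) <= n.+3%:R by rewrite ler_nat ltnS; exact: leq_trans Nn (leq_trans (leqnSn n) (leqnSn n.+1)).
    have h3 : (r - l) / d < n.+3%:R by exact: lt_le_trans h h2.
    rewrite ltr_pdivrMr // in h3.
    rewrite ler_pdivrMr ?ltr0n //; apply: ltW; by rewrite mulrC.
  pose F := \bigcup_(n in `I_N) (G n @` C n).
  have clF : closed F.
    apply: closed_bigcup; first exact: finite_II.
    move=> n _; apply: compact_closed; first exact: (@norm_hausdorff _ R^o).
    have [[[h [_ [_ [_ [_ [cG _]]]]]] _] _ _ _] := hG n.
    have [CI Ccl _ _] := hC n.
    apply: continuous_compact; first exact: continuous_subspaceW CI cG.
    apply: subclosed_compact Ccl _ CI; rewrite I01E; exact: segment_compact.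
  suff : closure F x by move/clF => [n _ [y Cy <-]]; right; exists n => //; exists y.
  move=> B nB.
  have nB' : nbhs x (B `&` ball x d) by apply: filterI => //; exact: nbhsx_ballx.
  have [z [Dz [Bz bz]]] := clx _ nB'.
  move: bz; rewrite -ball_normE /ball_ /= ltr_norml => /andP[bz1 bz2].
  have lzr : l < z < r by apply/andP; split; lra.
  have lz2 : l + d < z by lra.
  have zr2 : z < r - d by lra.
  have nKz : ~ K z by apply: gp.
  case: Dz => [//|[n _ [y Cy yz]]].
  exists z; split => //; exists n; last by exists y.
  rewrite /= ltnNge; apply/negP => Nn.
  have [CI _ _ _] := hC n.
  have Iy := CI y Cy.
  have [_ gK _ gprop] := hG n.
  case: (pselect (K y)) => Ky.
    by apply: nKz; rewrite -yz gK.
  have [l' [r' [Kl' Kr' lzr' gp' hz]]] := gprop y Cy Iy Ky.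
  rewrite yz in lzr' hz.
  have [e1 e2] := gap_uniq Kl' Kr' lzr' gp'.
  have [e3 e4] := gap_uniq Kl Kr lzr gp.
  have l'l : l' = l by rewrite -e1 e3.
  have r'r : r' = r by rewrite -e2 e4.
  rewrite l'l r'r in hz.
  have hN := HN n Nn; case: hz => hz.
    have : z <= l + d by apply: (le_trans hz); rewrite lerD2l.
    by rewrite leNgt lz2.
  have : r - d <= z by apply: le_trans hz; rewrite lerD2l lerN2.
  by rewrite leNgt zr2.
- apply: countableU2 => //.
  apply: bigcup_countable; first exact: countableP.
  move=> n _; apply: countable_img; by have [_ _ Cc _] := hC n.
- move=> z [n _ [y by_ <-]]; right; exists n => //; exists y => //.
  by have [_ _ _ bC] := hC n; exact: bC.
Qed.
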